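(* Let $G=(V,E)$ be a connected plane graph with positive edge weights $w_e>0$, $e\in E$, and let $p=(v_1,e_1,v_2,\ldots,v_{n+1})$ be a cut-path of $G$ with edge set $E(p)=\{e_1,\ldots,e_n\}$. Let $V_1^*,V_2^*$ be the two sets of bounded faces into which the cut-path divides the weak dual vertex set $V^*$ (so that $E(p)$ is exactly the set of edges of $G$ adjacent to a face in $V_1^*$ and a face in $V_2^*$), and let $N_{1,2}^*=|V_{1,2}^*|$. Then the algebraic connectivity $\lambda_2^*$ (second-smallest eigenvalue of the dual Laplacian $\mathbf{L}^*=\mathbf{D}^*-\mathbf{A}^*$) of the weak dual graph satisfies $$\lambda_2^*\le \frac{N_1^*+N_2^*}{N_1^*N_2^*}\sum_{e\in E(p)} w_e^{-1}.$$
   Context: The weak dual $G^*$ of a connected plane graph $G$ has as vertices the faces of $G$ excluding the outer face. Its weighted adjacency matrix has entries $A^*_{f,g}=\sum_{e \text{ shared by faces } f \text{ and } g} 1/w_e$ for faces $f\neq g$, and $\mathbf{D}^*$ is diagonal with $D^*_{f,f}=\sum_g A^*_{f,g}$; the dual Laplacian is $\mathbf{L}^*=\mathbf{D}^*-\mathbf{A}^*$, with eigenvalues $0=\lambda_1^*\le\lambda_2^*\le\cdots$. The outer boundary $\mathcal{B}$ of $G$ is the cyclic path of edges adjacent to the exterior face and the connecting vertices. A cut-path is a path $p=(v_1,e_1,\ldots,v_{n+1})$ in $G$ containing no edges of $\mathcal{B}$ such that either it is cyclic and contains at most one vertex of $\mathcal{B}$, or it is acyclic with $v_1,v_{n+1}\in\mathcal{B}$.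 Such a cut-path induces a decomposition $V^*=V_1^*\cup V_2^*$, $V_1^*\cap V_2^*=\emptyset$, into two connected sets of bounded faces whose separating edges are exactly $E(p)$. *)

(* Defs.v *)
(* Plane graphs are represented as combinatorial maps
   (rotation systems) of genus 0 with a distinguished outer face. *)
From HB Require Import structures.
From mathcomp Require Import all_boot all_order all_fingroup all_algebra.
From mathcomp Require Import reals.

Set Implicit Arguments.
Unset Strict Implicit.
Unset Printing Implicit Defensive.

Import Order.TTheory GRing.Theory Num.Theory.
Local Open Scope ring_scope.

Section PlaneMap.

Variable D : finType.          (* darts = oriented edge-sides *)
Variables (ed nx : {perm D}).   (* ed : edge involution, nx : rotation at vertices *)

(* face permutation phi = nx o ed (perm product is left-to-right) *)
Definition phi : {perm D} := (ed * nx)%g.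

Definition vertex_of (d : D) : {set D} := porbit nx d.
Definition edge_of (d : D) : {set D} := porbit ed d.
Definition face_of (d : D) : {set D} := porbit phi d.

Definition vertices : {set {set D}} := porbits nx.
Definition edges : {set {set D}} := porbits ed.
Definition faces : {set {set D}} := porbits phi.

Definition map_axiom : Prop := forall d, ed (ed d) = d /\ ed d != d.

Definition map_connected : Prop :=
  forall d d', connect [rel x y | (y == ed x) || (y == nx x)] d d'.

(* genus 0 (Euler's formula V - E + F = 2) *)
Definition planar_map : Prop := (#|vertices| + #|faces| = #|edges| + 2)%N.

Variable d0 : D.  (* a dart of the outer (exterior) face *)

Definition outer_face : {set D} := face_of d0.

Definition Vstar : {set {set D}} := faces :\ outer_face.

Definition boundary_edge (d : D) : bool := (d \in outer_face) || (ed d \in outer_face).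

Definition boundary_vertex (v : {set D}) : bool :=
  [exists d, boundary_edge d && (v == vertex_of d)].

Definition dual_adj (f g : {set D}) : bool :=
  (f != g) && [exists d, (d \in f) && (ed d \in g)].

Definition dual_connected_set (V : {set {set D}}) : Prop :=
  forall f g, f \in V -> g \in V ->
    connect [rel x y | [&& x \in V, y \in V & dual_adj x y]] f g.

(* A path given by its sequence of darts d1 :: ps; dart d goes from
   vertex_of d to vertex_of (ed d). *)
Definition path_verts (d1 : D) (ps : seq D) : seq {set D} :=
  [seq vertex_of x | x <- d1 :: ps] ++ [:: vertex_of (ed (last d1 ps))].

Definition is_walk (d1 : D) (ps : seq D) : bool :=
  path [rel x y | vertex_of (ed x) == vertex_of y] d1 ps.

Definition cut_path (d1 : D) (ps : seq D) : Prop :=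
  let p := d1 :: ps in
  let vs := path_verts d1 ps in
  [/\ is_walk d1 ps,
      uniq [seq edge_of x | x <- p],
      all (fun x => ~~ boundary_edge x) p &
      ([/\ vertex_of (ed (last d1 ps)) = vertex_of d1,
           uniq [seq vertex_of x | x <- p] &
           (#|[set v in vs | boundary_vertex v]| <= 1)%N]
       \/
       [/\ uniq vs, boundary_vertex (vertex_of d1) &
           boundary_vertex (vertex_of (ed (last d1 ps)))])].

Definition path_edges (p : seq D) : {set {set D}} := [set edge_of x | x in p].



Variable R : realType.
Variable w : D -> R.   (* weight of the edge containing the dart *)

Definition Nstar := #|Vstar|.

Definition face_at (i : 'I_Nstar) : {set D} := enum_val i.

Definition dual_adjacency : 'M[R]_Nstar :=
  \matrix_(i, j) (if i == j then 0
                  else \sum_(d | (d \in face_at i) && (ed d \in face_at j)) (w d)^-1).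

Definition dual_degree : 'M[R]_Nstar :=
  diag_mx (\row_i \sum_j dual_adjacency i j).

Definition dual_laplacian : 'M[R]_Nstar := dual_degree - dual_adjacency.

End PlaneMap.

Definition sorted_spectrum (R : realType) (n : nat) (M : 'M[R]_n) (s : seq R) : Prop :=
  sorted <=%R s /\ char_poly M = \prod_(x <- s) ('X - x%:P).

(* Main.v *)
Require Import Defs.
From HB Require Import structures.
From mathcomp Require Import all_boot all_order all_fingroup all_algebra.
From mathcomp Require Import reals complex.
From mathcomp Require Import ring lra.
Import Order.TTheory GRing.Theory Num.Theory.
Local Open Scope ring_scope.
Local Open Scope sesquilinear_scope.

Section Graph.
Variables (D : finType) (ed nx : {perm D}) (d0 : D).

Lemma face_mem F d : F \in faces ed nx -> (d \in F) = (face_of ed nx d == F).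
Proof.
case/imsetP => e _ ->; rewrite /face_of eq_porbit_mem //.
Qed.

Lemma Vstar_faces F : F \in Vstar ed nx d0 -> F \in faces ed nx.
Proof. by rewrite inE => /andP[]. Qed.

Lemma ed_iter (Hmap : map_axiom ed) x i : ((ed ^+ i)%g x == x) || ((ed ^+ i)%g x == ed x).
Proof.
elim: i => [|i IH]; first by rewrite expg0 perm1 eqxx.
rewrite expgSr permM; case/orP: IH => /eqP ->; first by rewrite eqxx orbT.
by have [-> _] := Hmap x; rewrite eqxx.
Qed.

Lemma edge_mem (Hmap : map_axiom ed) x d : (d \in edge_of ed x) = (d == x) || (d == ed x).
Proof.
apply/porbitP/idP => [[i ->]|]; first exact: ed_iter.
case/orP => /eqP ->; first by exists 0%N; rewrite expg0 perm1.
by exists 1%N; rewrite expg1.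
Qed.


Variable R : realType.
Local Notation Vs := (Vstar ed nx d0).
Local Notation g := (@face_at D ed nx d0).

Lemma sum_Vstar (G : {set D} -> R) :
  \sum_(i < Nstar ed nx d0) G (g i) = \sum_(F in Vs) G F.
Proof. by rewrite [RHS](big_enum_val G). Qed.

Lemma sum_single d (G : {set D} -> R) :
  \sum_(F in Vs) (d \in F)%:R * G F = (face_of ed nx d \in Vs)%:R * G (face_of ed nx d).
Proof.
have [h|h] := boolP (face_of ed nx d \in Vs).
  rewrite (bigD1 (face_of ed nx d)) //= porbit_id mul1r big1 ?addr0 //.
  move=> F /andP[FV Fne]; rewrite face_mem ?Vstar_faces // eq_sym (negbTE Fne).
  by rewrite mul0r.
rewrite mul0r big1 // => F FV; rewrite face_mem ?Vstar_faces //.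
by case: eqP => [E|_]; [rewrite E FV in h | rewrite mul0r].
Qed.

Lemma sum2_single d e (T : {set D} -> {set D} -> R) :
  \sum_i \sum_j ((d \in g i) && (e \in g j))%:R * T (g i) (g j) =
  ((face_of ed nx d \in Vs) && (face_of ed nx e \in Vs))%:R
     * T (face_of ed nx d) (face_of ed nx e).
Proof.
rewrite (sum_Vstar (fun F => \sum_j ((d \in F) && (e \in g j))%:R * T F (g j))).
under eq_bigr => F _ do rewrite (sum_Vstar (fun G => ((d \in F) && (e \in G))%:R * T F G)).
under eq_bigr => F _ do under eq_bigr => G _ do rewrite -mulnb natrM -mulrA.
under eq_bigr => F _ do rewrite -mulr_sumr sum_single mulrCA.
by rewrite -mulr_sumr (sum_single d (fun F => T F _)) -mulnb natrM; ring.
Qed.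

Lemma uniq_map_inj (T1 T2 : eqType) (f : T1 -> T2) s :
  uniq (map f s) -> {in s &, injective f}.
Proof.
elim: s => //= a s IH /andP[nin u] x y; rewrite !inE.
case/orP => [/eqP->|xs]; case/orP => [/eqP->|ys] // fe.
- by case/negP: nin; rewrite fe; apply: map_f.
- by case/negP: nin; rewrite -fe; apply: map_f.
- exact: IH.
Qed.

Lemma cut_sum (Hmap : map_axiom ed) (p : seq D) (F : D -> R) :
  uniq (map (edge_of ed) p) ->
  \sum_d (edge_of ed d \in path_edges ed p)%:R * F d = \sum_(x <- p) (F x + F (ed x)).
Proof.
move=> u.
have -> : \sum_d (edge_of ed d \in path_edges ed p)%:R * F d =
          \sum_(d | edge_of ed d \in path_edges ed p) F d.
  by rewrite [RHS]big_mkcond; apply: eq_bigr => d _; case: ifP; rewrite ?mul1r ?mul0r.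
rewrite (partition_big (edge_of ed) (mem (path_edges ed p))) //=.
rewrite /path_edges big_imset /=; last exact: uniq_map_inj.
rewrite -big_uniq /=; last exact: map_uniq u.
rewrite big_seq [RHS]big_seq; apply: eq_bigr => x xp.
rewrite (eq_bigl (fun d => (d == x) || (d == ed x))); last first.
  move=> d /=; have -> : (edge_of ed d == edge_of ed x) = (d == x) || (d == ed x).
    by rewrite /edge_of eq_porbit_mem -edge_mem.
  case E: ((d == x) || (d == ed x)); rewrite ?andbF ?andbT //.
  apply/imsetP; exists x => //; apply/eqP.
  by rewrite /edge_of eq_porbit_mem; move: E; rewrite -(edge_mem Hmap).
have [_ edx] := Hmap x.
rewrite (bigD1 x) ?eqxx //=.
rewrite (bigD1 (ed x)) /=; last by rewrite eqxx orbT andTb edx.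
rewrite big1 ?addr0 // => d /andP[/andP[]].
by case/orP => /eqP -> ; rewrite eqxx // andbF.
Qed.

End Graph.
Section Spec.
Variable R : realType.
Local Notation C := (R[i]).
Local Notation f := (real_complex R).

Lemma conjf (a : R) : (f a)^* = f a.
Proof. by apply: conj_Creal; rewrite complex_real. Qed.

Lemma mapC_tr m n (A : 'M[R]_(m, n)) : (map_mx f A)^t* = map_mx f A^T.
Proof. by apply/matrixP => i j; rewrite !mxE conjf. Qed.

Lemma char_poly_unitconj (F : fieldType) n (P P' D : 'M[F]_n) :
  P' *m P = 1%:M -> char_poly (P' *m D *m P) = char_poly D.
Proof.
move=> HP; rewrite /char_poly.
have e : char_poly_mx (P' *m D *m P) =
   map_mx polyC P' *m char_poly_mx D *m map_mx polyC P.
  rewrite /char_poly_mx mulmxBr mulmxBl -!map_mxM mul_mx_scalar -scalemxAl.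
  by rewrite -map_mxM HP map_mx1 scalemx1.
by rewrite e !det_mulmx mulrAC -det_mulmx -map_mxM HP map_mx1 det1 mul1r.
Qed.


Lemma mapq m (a b : 'rV[R]_m) (M : 'M[R]_m) :
  (map_mx f a *m map_mx f M *m (map_mx f b)^t*) 0 0 = f ((a *m M *m b^T) 0 0).
Proof. by rewrite mapC_tr -!map_mxM mxE. Qed.

Lemma mapq2 m (a b : 'rV[R]_m) :
  (map_mx f a *m (map_mx f b)^t*) 0 0 = f ((a *m b^T) 0 0).
Proof. by rewrite mapC_tr -!map_mxM mxE. Qed.

Lemma expand m (a b : C) (p q : 'rV[C]_m) (M : 'M[C]_m) :
  ((a *: p - b *: q) *m M *m (a *: p - b *: q)^t*) 0 0 =
  a * a^* * (p *m M *m p^t*) 0 0 - a * b^* * (p *m M *m q^t*) 0 0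
  - b * a^* * (q *m M *m p^t*) 0 0 + b * b^* * (q *m M *m q^t*) 0 0.
Proof.
have -> : (a *: p - b *: q)^t* = a^* *: p^t* - b^* *: q^t*.
  by apply/matrixP => i j; rewrite !mxE rmorphB !rmorphM.
rewrite !mulmxBl -?scalemxAl !mulmxBr -?scalemxAr -?scalemxAl !mxE.
ring.
Qed.

Lemma courant n (L : 'M[R]_n) (s : seq R) (u x : 'rV[R]_n) :
  L^T = L -> u *m L = 0 -> sorted <=%R s ->
  char_poly L = \prod_(a <- s) ('X - a%:P) ->
  (x *m u^T) 0 0 = 0 -> 0 < (u *m u^T) 0 0 -> 0 <= (x *m x^T) 0 0 ->
  0 <= (x *m L *m x^T) 0 0 ->
  s`_1 * (x *m x^T) 0 0 <= (x *m L *m x^T) 0 0.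
Proof.
move=> HL HuL Hs cpL Hxu Hu Hx HQ.
have [small|big] := leqP (size s) 1.
  by rewrite nth_default // mul0r.
set Lc := map_mx f L.
have LcT : Lc^t* = Lc by rewrite mapC_tr HL.
have LcN : Lc \is normalmx by rewrite qualifE LcT.
set P := spectralmx Lc; set dg := spectral_diag Lc.
have HLc : Lc = invmx P *m diag_mx dg *m P by apply/orthomx_spectralP.
have Pu : P \is unitarymx := spectral_unitarymx Lc.
have PPt : P *m P^t* = 1%:M by apply/unitarymxP.
have PtP : P^t* *m P = 1%:M by rewrite -invmx_unitary // mulVmx // spectral_unit.
rewrite invmx_unitary // in HLc.
have pe : perm_eq (map f s) [seq dg 0 i | i <- enum 'I_n].
  apply: prod_XsubC_eq.
  rewrite big_map -(map_prod_XsubC f) -cpL map_char_poly -/Lc HLc.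
  rewrite char_poly_unitconj // char_poly_trig ?diag_mx_is_trig //.
  rewrite big_map big_enum /=; apply: eq_bigr => i _; by rewrite mxE eqxx mulr1n.
have dgR i : dg 0 i = f (complex.Re (dg 0 i)).
  have : dg 0 i \in map f s by rewrite (perm_mem pe); apply: map_f; rewrite mem_enum.
  by case/mapP => a _ ->.
set tr := [seq complex.Re (dg 0 i) | i <- enum 'I_n].
have pe2 : perm_eq s tr.
  apply: (perm_map_inj (@complexI R)); rewrite -map_comp.
  by rewrite (eq_map (g := fun i => dg 0 i) _) //= => i /=; rewrite -dgR.
move: Hs pe pe2 big; case: s cpL => [|s0 [|s1 r]] //= cpL Hs pe pe2 _.
have [k _ Hk] : exists2 k, k \in enum 'I_n & dg 0 k = f s0.
  have : f s0 \in [seq dg 0 i | i <- enum 'I_n] by rewrite -(perm_mem pe) mem_head.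
  by case/mapP => k kin ->; exists k.
have s0min : all (fun z => s0 <= z) (s0 :: s1 :: r).
  rewrite /= lexx /=; have := order_path_min (@le_trans _ R) (Hs : path <=%R s0 (s1 :: r)). exact.
have key i : i != k -> s1 <= complex.Re (dg 0 i).
  move=> ik; rewrite leNgt; apply/negP => lt1.
  have tri : complex.Re (dg 0 i) \in s0 :: s1 :: r.
    by rewrite (perm_mem pe2); apply: map_f; rewrite mem_enum.
  have s0le : s0 <= complex.Re (dg 0 i) by move/allP: s0min => /(_ _ tri).
  have cnt1 : (count (fun z : R => (z < s1)%R) (s0 :: s1 :: r) <= 1)%N.
    rewrite /= ltxx add0n.
    suff -> : count (fun z : R => (z < s1)%R) r = 0%N by rewrite addn0; case: (s0 < s1).
    apply/eqP; rewrite -leqn0 leqNgt -has_count; apply/hasP => -[z zr].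
    have : all (fun z => s1 <= z) r by apply: (order_path_min le_trans); case/andP: Hs.
    by move/allP => /(_ _ zr); rewrite leNgt => /negbTE ->.
  have Qk : complex.Re (dg 0 k) < s1 by rewrite Hk /=; apply: le_lt_trans s0le lt1.
  have kin : k \in enum 'I_n by rewrite mem_enum.
  have cnt2 : (2 <= count (fun z : R => (z < s1)%R) tr)%N.
    rewrite count_map (seq.permP (perm_to_rem kin)) /= Qk ltnS -has_count.
    apply/hasP; exists i => //.
    by rewrite mem_rem_uniq ?enum_uniq // inE ik mem_enum.
  by move: cnt1; rewrite (seq.permP pe2) leqNgt (leq_trans _ cnt2).
have lower (v : 'rV[C]_n) : (v *m P^t*) 0 k = 0 ->
    f s1 * (v *m v^t*) 0 0 <= (v *m Lc *m v^t*) 0 0.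
  move=> vk.
  have e1 : v *m Lc *m v^t* = (v *m P^t*) *m diag_mx dg *m (v *m P^t*)^t*.
    by rewrite HLc trmx_mul map_mxM trmxCK !mulmxA.
  have e2 : v *m v^t* = (v *m P^t*) *m (v *m P^t*)^t*.
    by rewrite trmx_mul map_mxM trmxCK mulmxA -(mulmxA v) PtP mulmx1.
  rewrite e1 e2; set y := v *m P^t*; move: vk; rewrite -/y => vk; clearbody y.
  rewrite mul_mx_diag !mxE mulr_sumr; apply: ler_sum => j _; rewrite !mxE.
  have [->|jk] := eqVneq j k.
    by rewrite vk !mul0r mulr0.
  have -> : y 0 j * dg 0 j * (y 0 j)^* = dg 0 j * (y 0 j * (y 0 j)^*) by ring.
  apply: ler_wpM2r; first exact: mul_conjC_ge0.
  by rewrite dgR lecR; apply: key.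
set uc := map_mx f u; set xc := map_mx f x.
set c1 := (uc *m P^t*) 0 k; set c2 := (xc *m P^t*) 0 k.
have uLu : (u *m L *m u^T) 0 0 = 0 by rewrite HuL mul0mx mxE.
have uLx : (u *m L *m x^T) 0 0 = 0 by rewrite HuL mul0mx mxE.
have xLu : (x *m L *m u^T) 0 0 = 0.
  by rewrite -mulmxA -{1}HL -trmx_mul HuL trmx0 mulmx0 mxE.
have uxT : (u *m x^T) 0 0 = 0.
  by rewrite -[u]trmxK -trmx_mul mxE Hxu.
suff [s1le0|H] : s1 <= 0 \/ exists a b : C, b != 0 /\
   f s1 * (a * a^* * f ((u *m u^T) 0 0) + b * b^* * f ((x *m x^T) 0 0))
   <= b * b^* * f ((x *m L *m x^T) 0 0).
- by apply: le_trans (mulr_le0_ge0 s1le0 Hx) HQ.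
- have [s1le0|s1gt0] := lerP s1 0.
    by apply: le_trans (mulr_le0_ge0 s1le0 Hx) HQ.
  case: H => a [b [bn0 H]].
  have bgt0 : 0 < b * b^* by rewrite mul_conjC_gt0.
  have : f s1 * (b * b^* * f ((x *m x^T) 0 0)) <= b * b^* * f ((x *m L *m x^T) 0 0).
    apply: le_trans H; apply: ler_wpM2l; first by rewrite ler0c ltW.
    rewrite lerDr mulr_ge0 ?mul_conjC_ge0 // ler0c ltW //.
  by rewrite mulrCA ler_pM2l // -rmorphM lecR.
have [c1eq0|c1n0] := eqVneq c1 0.
  left; have := lower uc c1eq0.
  rewrite mapq mapq2 uLu -rmorphM lecR => H.
  by rewrite -(pmulr_lle0 _ Hu).
right; exists c2, c1; split => //.
set v := c2 *: uc - c1 *: xc.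
have vk : (v *m P^t*) 0 k = 0.
  rewrite /v mulmxBl -!scalemxAl mxE [(c2 *: _ : 'M_(1,n)) 0 k]mxE [(- _ : 'M_(1,n)) 0 k]mxE [(_ *: _ : 'M_(1,n)) 0 k]mxE -/c1 -/c2.
  ring.
have := lower v vk.
have e : v *m v^t* = v *m 1%:M *m v^t* by rewrite mulmx1.
rewrite e /v !expand !mulmx1 /uc /xc !mapq2 !mapq uLu uLx xLu uxT Hxu !rmorph0.
by rewrite !mulr0 !subr0 add0r.
Qed.
End Spec.
Section Lap.
Variable R : realType.

Lemma lap_quad n (A : 'M[R]_n) (x : 'rV[R]_n) :
  (x *m (diag_mx (\row_i \sum_j A i j) - A) *m x^T) 0 0 =
  \sum_i \sum_j A i j * (x 0 i * (x 0 i - x 0 j)).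
Proof.
rewrite mxE.
under eq_bigr => j _ do rewrite !mxE mulr_suml.
rewrite exchange_big /=; apply: eq_bigr => i _.
under eq_bigr => j _ do rewrite !mxE mulrBr mulrBl.
rewrite sumrB [X in X - _](bigD1 i) //= [X in _ + X - _]big1; last first.
  by move=> j /negbTE ji; rewrite eq_sym ji mulr0n mulr0 mul0r.
rewrite eqxx mulr1n addr0 mulr_sumr mulr_suml -sumrB.
by apply: eq_bigr => j _; ring.
Qed.

Lemma lap_u n (A : 'M[R]_n) : A^T = A ->
  const_mx 1 *m (diag_mx (\row_i \sum_j A i j) - A) = 0 :> 'rV[R]_n.
Proof.
move=> AT; apply/rowP => j; rewrite !mxE.
under eq_bigr => i _ do rewrite !mxE mul1r.
rewrite sumrB [X in X - _](bigD1 j) //= [X in _ + X - _]big1; last first.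
  by move=> i /negbTE ij; rewrite ij mulr0n.
rewrite eqxx mulr1n addr0; apply/eqP; rewrite subr_eq0; apply/eqP.
by apply: eq_bigr => i _; rewrite -{1}AT mxE.
Qed.

Lemma lap_sym n (A : 'M[R]_n) : A^T = A ->
  (diag_mx (\row_i \sum_j A i j) - A)^T = (diag_mx (\row_i \sum_j A i j) - A).
Proof. by move=> AT; rewrite linearB /= tr_diag_mx AT. Qed.

End Lap.

Local Close Scope sesquilinear_scope.

Theorem corollary1 (D : finType) (ed nx : {perm D}) (d0 : D)
  (R : realType) (w : D -> R)
  (Hmap : map_axiom ed) (Hconn : map_connected ed nx) (Hplanar : planar_map ed nx)
  (Hwsym : forall d, w (ed d) = w d) (Hwpos : forall d, 0 < w d)
  (d1 : D) (ps : seq D) (Hcut : cut_path ed nx d0 d1 ps)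
  (V1 V2 : {set {set D}})
  (HV : V1 :|: V2 = Vstar ed nx d0) (HVdisj : V1 :&: V2 = set0)
  (HV1c : dual_connected_set ed V1) (HV2c : dual_connected_set ed V2)
  (Hsep : forall d, ((face_of ed nx d \in V1) && (face_of ed nx (ed d) \in V2))
                    || ((face_of ed nx d \in V2) && (face_of ed nx (ed d) \in V1))
                    = (edge_of ed d \in path_edges ed (d1 :: ps)))
  (s : seq R) (Hs : sorted_spectrum (dual_laplacian ed nx d0 w) s) :
  s`_1 <= (#|V1|%:R + #|V2|%:R) / (#|V1|%:R * #|V2|%:R)
          * \sum_(x <- d1 :: ps) (w x)^-1.
Proof.
have edK d : ed (ed d) = d by case: (Hmap d).
have uniqE : uniq (map (edge_of ed) (d1 :: ps)) by case: Hcut.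
set p := d1 :: ps in Hsep uniqE *.
set cut := \sum_(x <- p) (w x)^-1.
set A := dual_adjacency ed nx d0 w.
set n := Nstar ed nx d0.
set g := @face_at D ed nx d0.
have Aij i j : A i j = if i == j then 0
     else \sum_(d | (d \in g i) && (ed d \in g j)) (w d)^-1 by rewrite mxE.
have AT : A^T = A.
  apply/matrixP => i j; rewrite mxE !Aij eq_sym; case: eqP => // _.
  rewrite (reindex_inj (@perm_inj _ ed)) /=.
  by apply: eq_big => [d|d _]; rewrite ?edK ?Hwsym // andbC.
have Vdis F : F \in V1 -> F \in V2 -> False.
  move=> h1 h2; have : F \in V1 :&: V2 by rewrite inE h1 h2.
  by rewrite HVdisj inE.
have VsE F : (F \in Vstar ed nx d0) = (F \in V1) || (F \in V2) by rewrite -HV inE.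
have sumV (G : {set D} -> R) : \sum_(F in Vstar ed nx d0) G F =
    \sum_(F in V1) G F + \sum_(F in V2) G F.
  rewrite (eq_bigl (fun F => F \in [predU V1 & V2])); last by move=> F; rewrite VsE.
  by apply: bigU; rewrite -setI_eq0 HVdisj.
set n1 : R := #|V1|%:R; set n2 : R := #|V2|%:R.
have [V1n V2n] : (0 < #|V1|)%N /\ (0 < #|V2|)%N.
  have := Hsep d1; have -> : edge_of ed d1 \in path_edges ed p.
    by apply/imsetP; exists d1; rewrite ?mem_head.
  by case/orP => /andP[a b]; split; apply/card_gt0P; [exists (face_of ed nx d1) | exists (face_of ed nx (ed d1)) | exists (face_of ed nx (ed d1)) | exists (face_of ed nx d1)].
have n1gt0 : 0 < n1 by rewrite ltr0n.
have n2gt0 : 0 < n2 by rewrite ltr0n.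
pose X := fun F : {set D} => if F \in V1 then n2 else - n1.
have sumX (G : R -> R) : \sum_(i < n) G (X (g i)) = G n2 * n1 + G (- n1) * n2.
  rewrite (@sum_Vstar _ ed nx d0 _ (fun F => G (X F))) sumV.
  rewrite (eq_bigr (fun _ => G n2)); last by move=> F F1; rewrite /X F1.
  rewrite [Y in _ + Y](eq_bigr (fun _ => G (- n1))); last first.
    by move=> F F2; rewrite /X; case: ifP => // F1; case: (Vdis F).
  by rewrite !sumr_const /n1 /n2 !mulr_natr.
pose x : 'rV[R]_n := \row_i X (g i).
pose u : 'rV[R]_n := const_mx 1.
have Hxu : (x *m u^T) 0 0 = 0.
  rewrite mxE; under eq_bigr do rewrite !mxE mulr1.
  by rewrite (sumX id) /=; ring.
have Xval : (x *m x^T) 0 0 = n1 * n2 * (n1 + n2).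
  rewrite mxE; under eq_bigr do rewrite !mxE.
  by rewrite (sumX (fun a => a * a)) /=; ring.
have Hu : 0 < (u *m u^T) 0 0.
  rewrite mxE; under eq_bigr do rewrite !mxE mulr1.
  rewrite sumr_const card_ord ltr0n /n /Nstar.
  apply: leq_trans V1n _; apply: subset_leq_card; rewrite -HV; exact: subsetUl.
pose H := fun F G : {set D} => X F * (X F - X G).
pose c12 := fun d => (face_of ed nx d \in V1) && (face_of ed nx (ed d) \in V2).
pose c21 := fun d => (face_of ed nx d \in V2) && (face_of ed nx (ed d) \in V1).
pose S12 := \sum_d (c12 d)%:R * (w d)^-1.
pose S21 := \sum_d (c21 d)%:R * (w d)^-1.
have Qval : (x *m dual_laplacian ed nx d0 w *m x^T) 0 0 = (n1 + n2) * (n2 * S12 + n1 * S21).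
  rewrite /dual_laplacian /dual_degree -/A lap_quad.
  transitivity (\sum_i \sum_j \sum_d ((d \in g i) && (ed d \in g j))%:R *
                   ((w d)^-1 * H (g i) (g j))).
    apply: eq_bigr => i _; apply: eq_bigr => j _; rewrite Aij !mxE.
    case: eqP => [->|_].
      by rewrite mul0r big1 // => d _; rewrite /H subrr !mulr0.
    rewrite mulr_suml big_mkcond; apply: eq_bigr => d _.
    by case: ifP => _; rewrite ?mul1r ?mul0r.
  under eq_bigr => i _ do rewrite exchange_big.
  rewrite exchange_big /S12 /S21 !mulr_sumr -big_split mulr_sumr /=.
  apply: eq_bigr => d _.
  have E := @sum2_single _ ed nx d0 _ d (ed d) (fun F G => (w d)^-1 * H F G).
  cbv beta in E; rewrite E !VsE /H /X /c12 /c21.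
  case a1 : (face_of ed nx d \in V1); case a2 : (face_of ed nx d \in V2);
  case b1 : (face_of ed nx (ed d) \in V1); case b2 : (face_of ed nx (ed d) \in V2);
  try (by case: (Vdis _ a1 a2)); try (by case: (Vdis _ b1 b2)); rewrite /=; ring.
have S21E : S21 = S12.
  rewrite /S21 (reindex_inj (@perm_inj _ ed)) /=; apply: eq_bigr => d _.
  by rewrite /c21 /c12 edK Hwsym andbC.
have Ssum : S12 + S21 = 2 * cut.
  rewrite /S12 /S21 -big_split /=.
  transitivity (\sum_d (edge_of ed d \in path_edges ed p)%:R * (w d)^-1).
    apply: eq_bigr => d _; rewrite -Hsep /c12 /c21.
    case a1 : (face_of ed nx d \in V1); case a2 : (face_of ed nx d \in V2);
    case b1 : (face_of ed nx (ed d) \in V1); case b2 : (face_of ed nx (ed d) \in V2);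
    try (by case: (Vdis _ a1 a2)); try (by case: (Vdis _ b1 b2)); rewrite /=; ring.
  rewrite (@cut_sum _ ed _ Hmap _ _ uniqE) /cut mulr_sumr; apply: eq_bigr => y _.
  by rewrite Hwsym; ring.
have S12E : S12 = cut.
  by apply: (@mulfI _ 2); [rewrite pnatr_eq0 | rewrite -Ssum S21E; ring].
have cut_ge0 : 0 <= cut.
  by apply: sumr_ge0 => y _; rewrite invr_ge0 ltW.
have Hc := @courant R n (dual_laplacian ed nx d0 w) s u x (@lap_sym R n A AT) (@lap_u R n A AT) (proj1 Hs) (proj2 Hs) Hxu Hu.
rewrite Xval Qval S21E S12E in Hc.
have Xgt0 : 0 < n1 * n2 * (n1 + n2) by rewrite !mulr_gt0 ?addr_gt0.
have Qge0 : 0 <= (n1 + n2) * (n2 * cut + n1 * cut).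
  exact: mulr_ge0 (addr_ge0 (ltW n1gt0) (ltW n2gt0)) (addr_ge0 (mulr_ge0 (ltW n2gt0) cut_ge0) (mulr_ge0 (ltW n1gt0) cut_ge0)).
rewrite -(ler_pM2r Xgt0); apply: le_trans (Hc (ltW Xgt0) Qge0) _.
rewrite le_eqVlt; apply/orP; left; apply/eqP.
have n1n0 : n1 != 0 by rewrite gt_eqF.
have n2n0 : n2 != 0 by rewrite gt_eqF.
by field; rewrite n1n0 n2n0.
Qed.
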